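(* Let $f=p/q$ be a rational function, $p,q$ of degree $l$, positive on the standard simplex $\Delta$, with $p>0$ on $\Delta$ and $b_\alpha(q,j,\Delta)>0$ for all $|\alpha|=j$, $j\ge l$. Let \[ D_1=\frac{\omega}{\min_{x\in\Delta}f(x)}+1,\qquad D_2=\frac{l(l-1)}{2}\,\frac{\max_{|\alpha|=l}|b_\alpha(p,l,\Delta)|}{\underline p}, \] where $\underline p=\min_\Delta p$. If $k>\max\{D_1,D_2\}$, then $f$ satisfies the global certificate of positivity $\mathrm{Cert}(b(f,k,\Delta))$: $b_\alpha(f,k,\Delta)\ge0$ for all $|\alpha|=k$ and $b_{k\hat e_i}(f,k,\Delta)>0$ for $i=0,\dots,n$.
   Context: $\Delta$ is the standard simplex with barycentric coordinates $\lambda=(1-\sum x_i,x_1,\dots,x_n)$; $B^{(k)}_\alpha=\frac{k!}{\alpha_0!\cdots\alpha_n!}\lambda^\alpha$; $b_\alpha(p,k,\Delta)$ Bernstein coefficients; $b_\alpha(f,k,\Delta)=b_\alpha(p,k,\Delta)/b_\alpha(q,k,\Delta)$; $\hat e_i$ unit vectors of $\mathbb{R}^{n+1}$. $\omega:=\frac{n(n+2)l(l-1)}{24\min_{|\alpha|=l}b_\alpha(q,l,\Delta)}\big(\|\nabla^2p\|_\infty+\zeta\|\nabla^2q\|_\infty\big)$ with $\zeta:=\max\{|\min_{|\alpha|=l}b_\alpha(f,l,\Delta)|,|\max_{|\alpha|=l}b_\alpha(f,l,\Delta)|\}$ and, with convention $\hat e_{-1}:=\hat e_n$, $\|\nabla^2p\|_\infty=\max_{|\gamma|=l-2,0\le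 i<j\le n}|b_{\gamma+\hat e_i+\hat e_{j-1}}+b_{\gamma+\hat e_{i-1}+\hat e_j}-b_{\gamma+\hat e_{i-1}+\hat e_{j-1}}-b_{\gamma+\hat e_i+\hat e_j}|$ for $b=b(p,l,\Delta)$, likewise for $q$. *)

(* Defs.v *)
From HB Require Import structures.
From mathcomp Require Import all_boot all_order all_algebra.
Set Implicit Arguments. Unset Strict Implicit. Unset Printing Implicit Defensive.
Import Order.TTheory GRing.Theory Num.Theory.
Local Open Scope ring_scope.

Section Bernstein.
Variables (R : rcfType) (n : nat).

Definition mindex := {ffun 'I_n.+1 -> nat}.
Definition mabs (a : mindex) : nat := (\sum_i a i)%N.
Definition madd (a b : mindex) : mindex := [ffun i => (a i + b i)%N].
Definition mscale (k : nat) (a : mindex) : mindex := [ffun i => (k * a i)%N].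
Definition unitv (i : 'I_n.+1) : mindex := [ffun j => (j == i : nat)].
(* \hat e_(i-1) with the convention \hat e_(-1) = \hat e_n *)
Definition unitv_prev (i : 'I_n.+1) : mindex :=
  if (i : nat) == 0%N then unitv ord_max else unitv (inord i.-1).

(* finite enumeration of the multi-indices with |alpha| = k *)
Definition of_bounded k (a : {ffun 'I_n.+1 -> 'I_k.+1}) : mindex :=
  [ffun i => (a i : nat)].

(* barycentric coordinates lambda(x) = (1 - sum x_i, x_1, ..., x_n) *)
Definition bary (x : 'rV[R]_n) (i : 'I_n.+1) : R :=
  match split (i : 'I_(1 + n)) with
  | inl _ => 1 - \sum_j x 0 j
  | inr j => x 0 j
  end.

Definition in_simplex (x : 'rV[R]_n) : Prop := forall i, 0 <= bary x i.

Definition bern (k : nat) (a : mindex) (x : 'rV[R]_n) : R :=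
  (k`!)%:R / (\prod_i (a i)`!)%:R * \prod_i bary x i ^+ a i.

Definition bern_sum (k : nat) (b : mindex -> R) (x : 'rV[R]_n) : R :=
  \sum_(a : {ffun 'I_n.+1 -> 'I_k.+1} | mabs (of_bounded a) == k)
     b (of_bounded a) * bern k (of_bounded a) x.

Definition bern_coefs (p : 'rV[R]_n -> R) (k : nat) (b : mindex -> R) : Prop :=
  forall x, p x = bern_sum k b x.

(* min / max of b_alpha over |alpha| = k (the set contains k \hat e_0) *)
Definition bmin (k : nat) (b : mindex -> R) : R :=
  \big[Num.min/b (mscale k (unitv ord0))]_(a : {ffun 'I_n.+1 -> 'I_k.+1} |
       mabs (of_bounded a) == k) b (of_bounded a).
Definition bmax (k : nat) (b : mindex -> R) : R :=
  \big[Num.max/b (mscale k (unitv ord0))]_(a : {ffun 'I_n.+1 -> 'I_k.+1} |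
       mabs (of_bounded a) == k) b (of_bounded a).

(* ||nabla^2 p||_infty computed from b = b(p,l,Delta) *)
Definition hess_norm (l : nat) (b : mindex -> R) : R :=
  \big[Num.max/0]_(g : {ffun 'I_n.+1 -> 'I_(l - 2).+1} |
                     mabs (of_bounded g) == (l - 2)%N)
   \big[Num.max/0]_(i : 'I_n.+1)
    \big[Num.max/0]_(j : 'I_n.+1 | (i < j)%N)
     let gm := of_bounded g in
     `| b (madd gm (madd (unitv i) (unitv_prev j)))
        + b (madd gm (madd (unitv_prev i) (unitv j)))
        - b (madd gm (madd (unitv_prev i) (unitv_prev j)))
        - b (madd gm (madd (unitv i) (unitv j))) |.

Definition omega (l : nat) (bp bq : mindex -> R) : R :=
  let bf := fun a => bp a / bq a in
  let zeta := Num.max `|bmin l bf| `|bmax l bf| in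
  (n * (n + 2) * l * (l - 1))%:R / (24%:R * bmin l bq)
    * (hess_norm l bp + zeta * hess_norm l bq).

Definition is_min_on_simplex (g : 'rV[R]_n -> R) (m : R) : Prop :=
  (exists2 x, in_simplex x & g x = m) /\ (forall x, in_simplex x -> m <= g x).

End Bernstein.

(* Main.v *)
Require Import Defs.
From HB Require Import structures.
From mathcomp Require Import all_boot all_order all_algebra.
From mathcomp Require Import zify ring lra.
Import Order.TTheory GRing.Theory Num.Theory.
Local Open Scope ring_scope.
Set Implicit Arguments. Unset Strict Implicit. Unset Printing Implicit Defensive.

Section Aux.
Variables (R : rcfType) (n : nat).
Local Notation mi := (mindex n).

Definition msum (k : nat) (F : mi -> R) : R :=
  \sum_(a : {ffun 'I_n.+1 -> 'I_k.+1} | mabs (of_bounded a) == k) F (of_bounded a).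

Definition mfact (a : mi) : nat := (\prod_i (a i)`!)%N.
Definition mpow (lam : 'I_n.+1 -> R) (a : mi) : R := \prod_i lam i ^+ a i.
Definition mle (b a : mi) : bool := [forall i, (b i <= a i)%N].
Definition msub (a b : mi) : mi := [ffun i => (a i - b i)%N].

Definition H (k : nat) (c : mi -> R) (lam : 'I_n.+1 -> R) : R :=
  msum k (fun a => c a * ((k`!)%:R / (mfact a)%:R) * mpow lam a).

Lemma eq_msum k F G : (forall a, mabs a = k -> F a = G a) -> msum k F = msum k G.
Proof. by move=> h; apply: eq_bigr => a /eqP /h. Qed.

Lemma bern_sumE k b x : bern_sum k b x = H k b (bary x).
Proof. by apply: eq_bigr => a _; rewrite /bern mulrA. Qed.

Lemma mabs_le (a : mi) i : (a i <= mabs a)%N.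
Proof. by rewrite /mabs (bigD1 i) //= leq_addr. Qed.

Definition to_bounded k (a : mi) : {ffun 'I_n.+1 -> 'I_k.+1} := [ffun i => inord (a i)].

Lemma to_boundedK k (a : mi) : mabs a = k -> of_bounded (to_bounded k a) = a.
Proof.
move=> ha; apply/ffunP => i; rewrite !ffunE inordK //.
by rewrite ltnS -ha mabs_le.
Qed.

Lemma mfact_gt0 a : (0 < mfact a)%N.
Proof. by rewrite /mfact prodn_gt0 // => i; rewrite fact_gt0. Qed.

Lemma natr_fact_neq0 m : (m`!)%:R != 0 :> R.
Proof. by rewrite pnatr_eq0 -lt0n fact_gt0. Qed.

Lemma natr_mfact_neq0 a : (mfact a)%:R != 0 :> R.
Proof. by rewrite pnatr_eq0 -lt0n mfact_gt0. Qed.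

Lemma bary0 (x : 'rV[R]_n) : bary x ord0 = 1 - \sum_j x 0 j.
Proof. by rewrite /bary; case: splitP => //= j; rewrite /= => /eqP; rewrite eq_sym. Qed.

Lemma bary_lift (x : 'rV[R]_n) j : bary x (lift ord0 j) = x 0 j.
Proof.
rewrite /bary; case: splitP => /= [i|j'].
  by case: i => -[] //.
rewrite /bump /= add1n => -[] /val_inj ->.
done.
Qed.

Lemma sum_bary (x : 'rV[R]_n) : \sum_i bary x i = 1.
Proof.
rewrite big_ord_recl bary0.
have -> : \sum_(i < n) bary x (lift ord0 i) = \sum_(i < n) x 0 i.
  by apply: eq_bigr => j _; exact: bary_lift.
by rewrite subrK.
Qed.


Lemma mleP (b a : mi) : reflect (forall i, (b i <= a i)%N) (mle b a).
Proof. exact: forallP. Qed.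

Lemma mabs_madd (a b : mi) : mabs (madd a b) = (mabs a + mabs b)%N.
Proof. by rewrite /mabs -big_split; apply: eq_bigr => i _; rewrite ffunE. Qed.

Lemma mabs_msub (a b : mi) : mle b a -> mabs (msub a b) = (mabs a - mabs b)%N.
Proof.
move/mleP=> h; have -> : mabs a = (mabs (msub a b) + mabs b)%N.
  by rewrite /mabs -big_split; apply: eq_bigr => i _; rewrite ffunE /= subnK.
by rewrite addnK.
Qed.

Lemma msub_madd (a b : mi) : msub (madd b a) b = a.
Proof. by apply/ffunP => i; rewrite !ffunE addKn. Qed.

Lemma mle_madd (a b : mi) : mle b (madd b a).
Proof. by apply/mleP => i; rewrite ffunE leq_addr. Qed.

Lemma msum_shift k (b : mi) (F : mi -> R) : (mabs b <= k)%N ->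
  msum k (fun a => if mle b a then F a else 0) =
  msum (k - mabs b) (fun g => F (madd b g)).
Proof.
move=> hbk; rewrite /msum -big_mkcondr /=.
set l := mabs b.
pose h (g : {ffun 'I_n.+1 -> 'I_(k - l).+1}) : {ffun 'I_n.+1 -> 'I_k.+1} :=
  [ffun i => inord (b i + g i)].
pose h' (a : {ffun 'I_n.+1 -> 'I_k.+1}) : {ffun 'I_n.+1 -> 'I_(k - l).+1} :=
  [ffun i => inord (a i - b i)].
have key : forall a : {ffun 'I_n.+1 -> 'I_k.+1},
    mabs (of_bounded a) == k -> mle b (of_bounded a) ->
    of_bounded (h' a) = msub (of_bounded a) b.
  move=> a /eqP ha hb; apply/ffunP => i; rewrite !ffunE inordK //.
  rewrite ltnS; have := mabs_le (msub (of_bounded a) b) i.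
  by rewrite mabs_msub // ha !ffunE.
have hbnd : forall g : {ffun 'I_n.+1 -> 'I_(k - l).+1}, mabs (of_bounded g) = (k - l)%N ->
    of_bounded (h g) = madd b (of_bounded g).
  move=> g hg; apply/ffunP => i; rewrite !ffunE inordK // ltnS.
  have := mabs_le (madd b (of_bounded g)) i.
  by rewrite mabs_madd hg -/l subnKC // !ffunE.
rewrite (reindex_onto h h') /=; last first.
  move=> a /andP [ha hb]; apply/ffunP => i.
  have := congr1 (fun f : mi => f i) (key a ha hb); rewrite !ffunE => e.
  apply/val_inj; rewrite /= e subnKC; last by move/mleP: hb => /(_ i); rewrite ffunE.
  by rewrite inord_val.
apply: eq_big => g; last first.
  move=> /andP [/andP [ha hb] /eqP e].
  suff hg : mabs (of_bounded g) = (k - l)%N by rewrite hbnd.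
  by rewrite -e key // mabs_msub // (eqP ha).
apply/idP/idP.
  move=> /andP [/andP [ha hb] /eqP e].
  by rewrite -e key // mabs_msub // (eqP ha).
move/eqP=> hg; rewrite hbnd // mabs_madd hg subnKC // eqxx mle_madd /=.
apply/eqP/ffunP => i; apply/val_inj.
have := congr1 (fun f : mi => f i) (key (h g) _ _).
rewrite hbnd // mabs_madd hg subnKC // eqxx mle_madd msub_madd => /(_ isT isT).
by rewrite !ffunE.
Qed.


Lemma mabs_unitv i : mabs (unitv i : mi) = 1%N.
Proof.
rewrite /mabs (bigD1 i) //= ffunE eqxx big1 // => j /negPf hj.
by rewrite ffunE hj.
Qed.

Lemma mle_unitv i (a : mi) : mle (unitv i) a = (0 < a i)%N.
Proof.
apply/mleP/idP => [/(_ i)|h j]; first by rewrite ffunE eqxx.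
by rewrite ffunE; case: eqP => [->|] //.
Qed.

Lemma mfact_sub_unit (a : mi) i : (0 < a i)%N ->
  mfact a = (a i * mfact (msub a (unitv i)))%N.
Proof.
move=> hai; rewrite /mfact (bigD1 i) // [in RHS](bigD1 i) //= !ffunE eqxx.
rewrite mulnA subn1.
have -> : (a i)`! = (a i * (a i).-1`!)%N by rewrite -{1}(prednK hai) factS prednK.
congr (_ * _)%N.
apply: eq_bigr => j /negPf hj; by rewrite !ffunE hj subn0.
Qed.

Lemma mpow_madd lam (a b : mi) : mpow lam (madd a b) = mpow lam a * mpow lam b.
Proof. by rewrite /mpow -big_split; apply: eq_bigr => i _; rewrite ffunE exprD. Qed.

Lemma mpow_unitv lam i : mpow lam (unitv i) = lam i.
Proof.
rewrite /mpow (bigD1 i) //= ffunE eqxx expr1 big1 ?mulr1 // => j /negPf hj.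
by rewrite ffunE hj expr0.
Qed.

Lemma msum0 F : msum 0 F = F [ffun _ => 0%N].
Proof.
have e : forall a : {ffun 'I_n.+1 -> 'I_1}, of_bounded a = [ffun _ => 0%N].
  by move=> a; apply/ffunP => i; rewrite !ffunE; case: (a i) => -[].
rewrite /msum (eq_bigl xpredT); last first.
  by move=> a; rewrite e /mabs big1 // => i _; rewrite ffunE.
rewrite (eq_bigr (fun _ => F [ffun _ => 0%N])); last by move=> a _; rewrite e.
by rewrite sumr_const card_ffun card_ord exp1n.
Qed.

Lemma msumB k F G : msum k (fun a => F a - G a) = msum k F - msum k G.
Proof. by rewrite /msum sumrB. Qed.

Lemma msumMr k F c : msum k (fun a => F a * c) = msum k F * c.
Proof. by rewrite /msum mulr_suml. Qed.

Lemma multinom m lam :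
  msum m (fun a => (m`!)%:R / (mfact a)%:R * mpow lam a) = (\sum_i lam i) ^+ m.
Proof.
elim: m => [|m IH].
  rewrite msum0 expr0 /mfact /mpow.
  have -> : (\prod_(i < n.+1) (([ffun _ => 0%N] : mi) i)`! = 1)%N.
    by apply: big1 => i _; rewrite ffunE.
  have -> : \prod_(i < n.+1) lam i ^+ (([ffun _ => 0%N] : mi) i) = 1.
    by apply: big1 => i _; rewrite ffunE.
  by rewrite mulr1 divr1.
rewrite exprS -IH mulr_suml; symmetry.
pose G i a := (m`!)%:R / (mfact (msub a (unitv i)))%:R * mpow lam a.
have step : forall i, lam i * msum m (fun a => (m`!)%:R / (mfact a)%:R * mpow lam a)
   = msum m.+1 (fun a => if mle (unitv i) a then G i a else 0).
  move=> i; rewrite msum_shift ?mabs_unitv // subn1 /= /msum mulr_sumr.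
  apply: eq_bigr => a _; rewrite /G msub_madd mpow_madd mpow_unitv.
  by rewrite mulrCA.
rewrite (eq_bigr _ (fun i _ => step i)) /msum exchange_big /=.
apply: eq_bigr => a /eqP ha.
rewrite (eq_bigr (fun i => ((of_bounded a i)%:R * (m`!)%:R / (mfact (of_bounded a))%:R)
   * mpow lam (of_bounded a))); last first.
  move=> i _; rewrite mle_unitv /G; case: (posnP (of_bounded a i)) => [->|hpos].
    by rewrite !mul0r.
  rewrite (mfact_sub_unit hpos) natrM.
  have h1 := natr_mfact_neq0 (msub (of_bounded a) (unitv i)).
  have h2 : (of_bounded a i)%:R != 0 :> R by rewrite pnatr_eq0 -lt0n.
  by field; rewrite h1 h2.
rewrite -mulr_suml -!mulr_suml -natr_sum.
by rewrite -/(mabs _) ha factS natrM.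
Qed.


Lemma msumMl k F c : msum k (fun a => c * F a) = c * msum k F.
Proof. by rewrite /msum mulr_sumr. Qed.

Lemma msum_exchange k l (T : mi -> mi -> R) :
  msum k (fun a => msum l (fun b => T a b)) = msum l (fun b => msum k (fun a => T a b)).
Proof. by rewrite /msum exchange_big. Qed.

Definition E k l (b : mi -> R) (al : mi) : R :=
  (mfact al)%:R / (k`!)%:R * msum l (fun be => if mle be al then
     b be * (l`!)%:R / (mfact be)%:R * ((k - l)`!)%:R / (mfact (msub al be))%:R else 0).

Lemma elev k l b lam : (l <= k)%N ->
  H k (E k l b) lam = H l b lam * (\sum_i lam i) ^+ (k - l).
Proof.
move=> hlk; rewrite /H.
rewrite (@eq_msum k _ (fun al => msum l (fun be => if mle be al then
     b be * (l`!)%:R / (mfact be)%:R * ((k - l)`!)%:R / (mfact (msub al be))%:R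
     * mpow lam al else 0))); last first.
  move=> al _; rewrite /E.
  set M := msum l _.
  transitivity (M * mpow lam al).
    have h1 := natr_fact_neq0 k; have h2 := natr_mfact_neq0 al.
    by field; rewrite h1 h2.
  rewrite /M -msumMr; apply: eq_msum => be _; by case: ifP => _; rewrite ?mul0r.
rewrite msum_exchange -msumMr; apply: eq_msum => be hbe.
rewrite msum_shift hbe // -(multinom (k - l) lam) -msumMl.
apply: eq_msum => g _; rewrite msub_madd mpow_madd; ring.
Qed.


Lemma H_ext k c (f g : 'I_n.+1 -> R) : (forall i, f i = g i) -> H k c f = H k c g.
Proof.
move=> e; apply: eq_msum => a _; congr (_ * _); apply: eq_bigr => i _; by rewrite e.
Qed.

Lemma H_scale k c lam (S : R) : S != 0 ->
  H k c (fun i => lam i / S) = H k c lam / S ^+ k.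
Proof.
move=> hS; rewrite /H -msumMr; apply: eq_msum => a ha.
rewrite -[_ * mpow lam a / _]mulrA; congr (_ * _).
transitivity (\prod_i (lam i ^+ a i * S^-1 ^+ a i)).
  by apply: eq_bigr => i _; rewrite exprMn.
by rewrite big_split /= prodrXr -/(mabs a) ha exprVn.
Qed.

Lemma H_zero k c : (forall x, bern_sum k c x = 0) ->
  forall lam, \sum_i lam i != 0 -> H k c lam = 0.
Proof.
move=> hc lam hS; set S := \sum_i lam i in hS.
pose x : 'rV[R]_n := \row_j (lam (lift ord0 j) / S).
have e : forall i, bary x i = lam i / S.
  move=> i; case: (unliftP ord0 i) => [j ->|->].
    by rewrite bary_lift mxE.
  rewrite bary0; under eq_bigr do rewrite mxE.
  rewrite -mulr_suml.
  have hS' := hS; rewrite /S big_ord_recl in hS' *.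
  by field.
have := hc x; rewrite bern_sumE (H_ext _ _ e) H_scale //.
move/eqP; rewrite mulf_eq0 invr_eq0 expf_eq0 (negPf hS) andbF orbF.
by move/eqP.
Qed.

Lemma digits_inj B m (f g : nat -> nat) : (forall i, f i < B)%N -> (forall i, g i < B)%N ->
  (\sum_(i < m) f i * B ^ i = \sum_(i < m) g i * B ^ i)%N -> forall i, (i < m)%N -> f i = g i.
Proof.
elim: m f g => [|m IH] f g hf hg; first by [].
rewrite !big_ord_recl /= !expn0 !muln1.
have sh : forall h : nat -> nat, (\sum_(i < m) h (bump 0 i) * B ^ bump 0 i =
   (\sum_(i < m) h i.+1 * B ^ i) * B)%N.
  by move=> h; rewrite big_distrl /=; apply: eq_bigr => i _; rewrite /bump /= expnSr mulnA.
rewrite !sh => e.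
have e0 : f 0%N = g 0%N.
  have := congr1 (fun z => z %% B)%N e; rewrite /= ![(f 0 + _)%N]addnC ![(g 0 + _)%N]addnC.
  by rewrite !modnMDl !modn_small.
have hB : (0 < B)%N := leq_ltn_trans (leq0n _) (hf 0%N).
move: e; rewrite e0 => /eqP; rewrite eqn_add2l eqn_mul2r (gtn_eqF hB) /= => /eqP e1.
case=> [_|i hi]; first by [].
exact: (IH (fun j => f j.+1) (fun j => g j.+1)).
Qed.

Definition code k (a : {ffun 'I_n.+1 -> 'I_k.+1}) : nat := (\sum_i a i * k.+1 ^ i)%N.

Lemma code_inj k : injective (@code k).
Proof.
move=> a b e; apply/ffunP => i; apply/val_inj.
pose f j := (a (inord j) : nat); pose g j := (b (inord j) : nat).
have hf : forall j, (f j < k.+1)%N by move=> j; exact: ltn_ord.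
have hg : forall j, (g j < k.+1)%N by move=> j; exact: ltn_ord.
have := @digits_inj k.+1 n.+1 f g hf hg.
rewrite /f /g.
under eq_bigr do rewrite inord_val.
under [X in _ = X -> _]eq_bigr do rewrite inord_val.
move=> /(_ e i (ltn_ord i)).
by rewrite inord_val.
Qed.

Lemma bern_unique k (c : mi -> R) : (forall x, bern_sum k c x = 0) ->
  forall al, mabs al = k -> c al = 0.
Proof.
move=> hc al hal.
pose cf (a : {ffun 'I_n.+1 -> 'I_k.+1}) := c (of_bounded a) * ((k`!)%:R / (mfact (of_bounded a))%:R).
pose P : {poly R} := \sum_(a | mabs (of_bounded a) == k) cf a *: 'X^(code a).
have hP : forall t : R, 0 < t -> P.[t] = 0.
  move=> t ht.
  pose lam (i : 'I_n.+1) := t ^+ (k.+1 ^ i).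
  have hS : \sum_i lam i != 0.
    rewrite lt0r_neq0 // big_ord_recl ltr_pwDl ?exprn_gt0 //.
    by apply: sumr_ge0 => i _; rewrite exprn_ge0 // ltW.
  have := H_zero hc hS; rewrite /H /msum => <-.
  rewrite /P horner_sum; apply: eq_bigr => a _.
  rewrite hornerZ hornerXn /cf; congr (_ * _).
  rewrite /mpow /lam /code -prodrXr; apply: eq_bigr => i _.
  by rewrite ffunE -exprM mulnC.
have P0 : P = 0.
  apply/eqP/negPn/negP => hnz.
  pose rs := [seq (i.+1)%:R : R | i <- iota 0 (size P)].
  have hall : all (root P) rs.
    apply/allP => z /mapP [i _ ->]; rewrite /root hP //.
  have hu : uniq rs.
    rewrite map_inj_uniq ?iota_uniq // => i j /eqP; rewrite eqr_nat => /eqP [].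
    done.
  have := max_poly_roots hnz hall hu.
  by rewrite size_map size_iota ltnn.
have := congr1 (fun p : {poly R} => p`_(code (to_bounded k al))) P0.
rewrite /P coef_sumMXn coef0.
rewrite (bigD1 (to_bounded k al)) /=; last by rewrite to_boundedK // hal eqxx eqxx.
rewrite big1 ?addr0; last first.
  move=> a /andP [/andP [_ /eqP hcode] hne].
  by move: hne; rewrite (code_inj hcode) eqxx.
rewrite /cf to_boundedK // => /eqP; rewrite mulf_eq0 => /orP [/eqP //|].
by rewrite mulf_eq0 invr_eq0 (negPf (natr_fact_neq0 _)) (negPf (natr_mfact_neq0 _)).
Qed.


Lemma H_sub k (f g : mi -> R) lam : H k (fun a => f a - g a) lam = H k f lam - H k g lam.
Proof. by rewrite /H -msumB; apply: eq_msum => a _; rewrite !mulrBl. Qed.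

Lemma H_one m lam : H m (fun _ => 1) lam = (\sum_i lam i) ^+ m.
Proof. by rewrite -multinom /H; apply: eq_msum => a _; rewrite mul1r. Qed.

Lemma elev_coef (p : 'rV[R]_n -> R) k l bl bk : (l <= k)%N ->
  bern_coefs p l bl -> bern_coefs p k bk ->
  forall al, mabs al = k -> bk al = E k l bl al.
Proof.
move=> hlk hl hk al hal; apply/eqP; rewrite -subr_eq0; apply/eqP.
apply: (@bern_unique k (fun a => bk a - E k l bl a)) => // x.
rewrite bern_sumE H_sub elev // sum_bary expr1n mulr1 -!bern_sumE.
by rewrite -hl -hk subrr.
Qed.

Lemma vandermonde k l : (l <= k)%N -> forall al, mabs al = k -> E k l (fun _ => 1) al = 1.
Proof.
move=> hlk al hal; apply/eqP; rewrite -subr_eq0; apply/eqP.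
apply: (@bern_unique k (fun a => E k l (fun _ => 1) a - 1)) => // x.
rewrite bern_sumE H_sub elev // !H_one -exprD subnKC //.
by rewrite subrr.
Qed.

Lemma mpow_scale lam (S : R) (a : mi) : mpow (fun i => lam i / S) a = mpow lam a / S ^+ mabs a.
Proof.
transitivity (\prod_i (lam i ^+ a i * S^-1 ^+ a i)).
  by apply: eq_bigr => i _; rewrite exprMn.
by rewrite big_split /= prodrXr -/(mabs a) exprVn.
Qed.

Lemma ler_msum k (F G : mi -> R) : (forall a, mabs a = k -> F a <= G a) -> msum k F <= msum k G.
Proof. by move=> h; apply: ler_sum => a /eqP /h. Qed.

End Aux.


Lemma ffact_le_exp e : forall m, (m ^_ e <= m ^ e)%N.
Proof.
elim: e => [|e IH] m; first by [].
rewrite ffactnS expnS leq_mul //; apply: leq_trans (IH _) _.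
case: e {IH} => [|e]; first by rewrite !expn0.
by rewrite leq_exp2r // leq_pred.
Qed.

Lemma ffact_bound k l : (k * k ^ l <= k * k ^_ l + 'C(l, 2) * k ^ l)%N.
Proof.
elim: l => [|l IH]; first by rewrite bin_small // addn0.
have hF := ffact_le_exp l k.
rewrite ffactnSr binS bin1 expnS.
nia.
Qed.

Section PRsec.
Variables (R : rcfType) (n : nat).
Local Notation mi := (mindex n).

Lemma mfact_ff (al be : mi) : mle be al ->
  mfact al = ((\prod_i (al i ^_ be i)) * mfact (msub al be))%N.
Proof.
move/mleP=> h; rewrite /mfact -big_split /=; apply: eq_bigr => i _.
by rewrite ffunE ffact_fact.
Qed.

Lemma PR k l (b : mi -> R) (M pm : R) :
  (l <= k)%N -> (0 < k)%N -> 0 <= M ->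
  (forall be : mi, mabs be = l -> `|b be| <= M) ->
  (forall x, in_simplex x -> pm <= H l b (bary x)) ->
  ('C(l, 2))%:R * M < k%:R * pm ->
  forall al : mi, mabs al = k -> 0 < E k l b al.
Proof.
move=> hlk hk hM hb hpm hC al hal.
set kr := (k%:R : R).
have kr0 : 0 < kr by rewrite ltr0n.
pose lamk i := (al i)%:R / kr.
pose v (be : mi) := (l`!)%:R / (mfact be)%:R * mpow lamk be.
pose ff (be : mi) := (\prod_i (al i ^_ be i))%N.
pose u (be : mi) := if mle be al then
   (l`!)%:R / (mfact be)%:R * (ff be)%:R / ((k ^ l)%N)%:R else 0 : R.
pose rho := ((k ^_ l)%N)%:R / ((k ^ l)%N)%:R : R.
have hkl : 0 < ((k ^ l)%N)%:R :> R by rewrite ltr0n expn_gt0 hk.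
have hrho : 0 < rho by rewrite divr_gt0 // ltr0n ffact_gt0.
have hsum : \sum_i lamk i = 1.
  rewrite /lamk -mulr_suml -natr_sum -/(mabs al) hal divff //.
  exact: lt0r_neq0.
have sv : msum l v = 1 by rewrite /v multinom hsum expr1n.
have sbv : pm <= msum l (fun be => b be * v be).
  pose x : 'rV[R]_n := \row_j lamk (lift ord0 j).
  have e : forall i, bary x i = lamk i.
    move=> i; case: (unliftP ord0 i) => [j ->|->].
      by rewrite bary_lift mxE.
    rewrite bary0; under eq_bigr do rewrite mxE.
    by rewrite -hsum big_ord_recl addrK.
  have hx : in_simplex x.
    by move=> i; rewrite e /lamk divr_ge0 // ltW.
  apply: le_trans (hpm x hx) _; rewrite (H_ext _ _ e) /H le_eqVlt; apply/orP; left.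
  by apply/eqP; apply: eq_msum => be _; rewrite /v !mulrA.
have rEg : forall b' : mi -> R, rho * E k l b' al = msum l (fun be => b' be * u be).
  move=> b'; rewrite /E mulrA -msumMl; apply: eq_msum => be hbe; rewrite /u.
  case: ifP => hle; last by rewrite !mulr0.
  rewrite /rho -(ffact_fact hlk) (mfact_ff hle) !natrM -/(ff be).
  have h1 : ((k ^_ l)%N)%:R != 0 :> R by rewrite pnatr_eq0 -lt0n ffact_gt0.
  have h2 := natr_fact_neq0 R (k - l).
  have h3 : (ff be)%:R != 0 :> R.
    rewrite pnatr_eq0 -lt0n prodn_gt0 // => i; rewrite ffact_gt0.
    by move/mleP: hle.
  have h4 := natr_mfact_neq0 R (msub al be).
  have h5 := lt0r_neq0 hkl.
  have h6 := natr_mfact_neq0 R be.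
  by field; rewrite ?h1 ?h2 ?h3 ?h4 ?h5 ?h6.
have su : msum l u = rho.
  have := rEg (fun _ => 1); rewrite vandermonde // mulr1 => ->.
  by apply: eq_msum => be _; rewrite mul1r.
have hv : forall be, mabs be = l -> v be =
    (l`!)%:R / (mfact be)%:R * (\prod_i (al i ^ be i))%N%:R / ((k ^ l)%N)%:R.
  move=> be hbe; rewrite /v /lamk mpow_scale hbe natrX natr_prod mulrA.
  congr (_ * _ / _); apply: eq_bigr => i _; by rewrite natrX.
have hfpos : forall be : mi, 0 < (l`!)%:R / (mfact be)%:R :> R.
  by move=> be; rewrite divr_gt0 // ltr0n ?fact_gt0 ?mfact_gt0.
have huv : forall be, mabs be = l -> 0 <= u be <= v be.
  move=> be hbe; rewrite hv // /u; case: ifP => hle.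
    apply/andP; split.
      apply: mulr_ge0; last by rewrite invr_ge0 ltW.
      by apply: mulr_ge0; [exact: ltW (hfpos be) | exact: ler0n].
    rewrite ler_pM2r ?invr_gt0 // ler_pM2l // ler_nat.
    by apply: leq_prod => i _; apply: ffact_le_exp.
  rewrite lexx /=; apply: mulr_ge0; last by rewrite invr_ge0 ltW.
  by apply: mulr_ge0; [exact: ltW (hfpos be) | exact: ler0n].
have hrho1 : 1 - rho <= ('C(l, 2))%:R / kr.
  have := ffact_bound k l; rewrite -(ler_nat R) !natrD !natrM -/kr => h.
  rewrite -subr_ge0.
  have hk0 := lt0r_neq0 kr0; have hkl0 := lt0r_neq0 hkl.
  have -> : 'C(l, 2)%:R / kr - (1 - rho) =
     ('C(l, 2)%:R * ((k ^ l)%N)%:R + kr * ((k ^_ l)%N)%:R - kr * ((k ^ l)%N)%:R)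
       / (kr * ((k ^ l)%N)%:R).
    by rewrite /rho; field; rewrite ?hk0 ?hkl0.
  apply: divr_ge0; last by rewrite mulr_ge0 // ltW.
  by rewrite subr_ge0 addrC.
have key : pm - M * (1 - rho) <= rho * E k l b al.
  have e1 : msum l (fun be => b be * u be) = msum l (fun be => b be * v be)
      - msum l (fun be => b be * (v be - u be)).
    by rewrite -msumB; apply: eq_msum => be _; ring.
  have e2 : msum l (fun be => b be * (v be - u be)) <= M * (1 - rho).
    rewrite -sv -su -msumB -msumMl; apply: ler_msum => be hbe.
    have /andP [hu0 huv'] := huv be hbe.
    apply: (ler_wpM2r _); first by rewrite subr_ge0.
    exact: le_trans (ler_norm _) (hb _ hbe).
  rewrite rEg e1; lra.
have : 0 < pm - M * (1 - rho).
  have h1 : M * (1 - rho) <= M * ('C(l, 2)%:R / kr) := ler_wpM2l hM hrho1.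
  have h2 : M * ('C(l, 2)%:R / kr) < pm.
    by rewrite mulrA ltr_pdivrMr // mulrC [pm * _]mulrC.
  lra.
move=> h0; have := lt_le_trans h0 key; rewrite pmulr_rgt0 //.
Qed.

End PRsec.

Lemma mabs_mscale (n : nat) k (i : 'I_n.+1) : mabs (mscale k (unitv i)) = k.
Proof.
rewrite /mabs (bigD1 i) //= !ffunE eqxx muln1 big1 ?addn0 // => j /negPf hj.
by rewrite !ffunE hj muln0.
Qed.

Unset Implicit Arguments.
Set Strict Implicit.

Theorem corollary5p15 (R : rcfType) (n l : nat)
    (p q : 'rV[R]_n -> R)
    (bp bq : nat -> mindex n -> R)
    (Hbp : forall j, (l <= j)%N -> bern_coefs p j (bp j))
    (Hbq : forall j, (l <= j)%N -> bern_coefs q j (bq j))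
    (Hf_pos : forall x, in_simplex x -> 0 < p x / q x)
    (Hp_pos : forall x, in_simplex x -> 0 < p x)
    (Hbq_pos : forall j (a : mindex n), (l <= j)%N -> mabs a = j -> 0 < bq j a)
    (fmin pmin : R)
    (Hfmin : is_min_on_simplex (fun x => p x / q x) fmin)
    (Hpmin : is_min_on_simplex p pmin)
    (k : nat) :
  let D1 := omega l (bp l) (bq l) / fmin + 1 in
  let D2 := (l * (l - 1))%:R / 2%:R
            * bmax l (fun a => `|bp l a|) / pmin in
  Num.max D1 D2 < k%:R ->
  (forall a : mindex n, mabs a = k -> 0 <= bp k a / bq k a) /\
  (forall i : 'I_n.+1,
     0 < bp k (mscale k (unitv i)) / bq k (mscale k (unitv i))).
Proof.
move=> D1 D2; rewrite gt_max => /andP [_ hD2].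
have [[x0 hx0 px0] hpmin] := Hpmin.
have pmin0 : 0 < pmin by rewrite -px0; exact: Hp_pos.
set M := bmax l (fun a => `|bp l a|) in D2 hD2.
have hbM : forall be : mindex n, mabs be = l -> `|bp l be| <= M.
  move=> be hbe; rewrite /M /bmax (bigD1 (to_bounded l be)) /=; last first.
    by rewrite to_boundedK // hbe.
  by rewrite to_boundedK // le_max lexx.
have hM0 : 0 <= M := le_trans (normr_ge0 _) (hbM _ (mabs_mscale l ord0)).
have hMp : pmin <= M.
  rewrite -px0 (Hbp l (leqnn l)) bern_sumE.
  have := H_one l (bary x0); rewrite sum_bary expr1n => h1.
  rewrite -[M]mulr1 -h1 /H -msumMl; apply: ler_msum => be hbe.
  rewrite mul1r -!mulrA ler_wpM2r //; last exact: le_trans (ler_norm _) (hbM _ hbe).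
  apply: mulr_ge0; first exact: ler0n.
  apply: mulr_ge0; first by rewrite invr_ge0 ler0n.
  by apply: prodr_ge0 => i _; rewrite exprn_ge0 // hx0.
have c2 : ('C(l, 2))%:R = (l * (l - 1))%:R / 2%:R :> R.
  have e : (l * (l - 1) = 'C(l, 2) * 2)%N.
    by rewrite -[X in ('C(l, 2) * X)%N]/(2`!) bin_ffact ffactnS ffactn1 subn1.
  by rewrite e natrM mulfK // pnatr_eq0.
have hD2' : ('C(l, 2))%:R * M < k%:R * pmin.
  by rewrite c2 -ltr_pdivrMr // mulrC.
have hCk : ('C(l, 2))%:R < k%:R :> R.
  apply: le_lt_trans hD2; rewrite /D2 c2 -mulrA ler_peMr //.
    by rewrite -c2 ler0n.
  by rewrite ler_pdivlMr // mul1r.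
have hk0 : (0 < k)%N by rewrite -(ltr_nat R); apply: le_lt_trans hCk; rewrite ler0n.
have hlk : (l <= k)%N.
  move: hCk; rewrite ltr_nat => h.
  have e : ('C(l, 2) * 2 = l * l.-1)%N.
    by rewrite -[X in ('C(l, 2) * X)%N]/(2`!) bin_ffact ffactnS ffactn1.
  have h2 : (l * l.-1 < 2 * k)%N by rewrite -e; nia.
  nia.
have hpos : forall a : mindex n, mabs a = k -> 0 < bp k a / bq k a.
  move=> a ha; apply: divr_gt0; last exact: Hbq_pos.
  rewrite (elev_coef hlk (Hbp l (leqnn l)) (Hbp k hlk)) //.
  apply: (PR hlk hk0 hM0 hbM _ hD2') => // x hx.
  by rewrite -bern_sumE -(Hbp l (leqnn l)); exact: hpmin.
split; first by move=> a ha; apply: ltW; exact: hpos.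
by move=> i; apply: hpos; exact: mabs_mscale.
Qed.
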